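(* For every $\omega\in\Omega^*$, $W^*\chi_\omega=\varphi_\omega$, i.e. $\chi_\omega(Wf)=\varphi_\omega(f)$ for all $f\in L^{\infty}(\mathbb{R}_+^{\times})$.
   Context: $L^{\infty}(\mathbb{R}_+)$ and $L^{\infty}(\mathbb{R}_+^{\times})$ are the real-valued essentially bounded measurable functions on $[0,\infty)$ and $[1,\infty)$. $W:L^{\infty}(\mathbb{R}_+^{\times})\to L^{\infty}(\mathbb{R}_+)$, $(Wf)(x)=f(e^x)$, with adjoint $(W^*\chi)(f)=\chi(Wf)$. Let $\beta\mathbb{N}_0$ be the Stone–Čech compactification of $\mathbb{N}_0$ (points = ultrafilters), $\tau$ the extension of $n\mapsto n+1$, $\Omega=(\beta\mathbb{N}_0\times[0,1])/\sim$ with $(\tau\eta,0)\sim(\eta,1)$, containing $\mathbb{R}_+$ via $(n,t)\mapsto n+t$, $\Omega^*=\Omega\setminus\mathbb{R}_+$; each $\omega=(\eta,t)$ is identified with the ultrafilter $\{A+t:A\in\eta\}$ on $\mathbb{R}_+$, and $e^\omega=\{e^A:A\in\omega\}$ is an ultrafilter on $[1,\infty)$. Define $\chi_\omega(g)=\omega\text{-}\lim_xe^{-x}\int_0^xg(t)e^t\,dt$ for $g\in L^{\infty}(\mathbb{R}_+)$ and $\varphi_\omega(f)=e^\omega\text{-}\lim_x\frac1x\int_1^xf(t)\,dt$ for $f\in L^{\infty}(\mathbb{R}_+^{\times})$ (limits along ultrafilters). *)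

(* Defs.v *)
From HB Require Import structures.
From mathcomp Require Import all_boot all_order all_algebra.
From mathcomp Require Import all_classical all_reals all_analysis.
Set Implicit Arguments. Unset Strict Implicit. Unset Printing Implicit Defensive.
Import Order.TTheory GRing.Theory Num.Theory.
Import numFieldNormedType.Exports.
Local Open Scope classical_set_scope.
Local Open Scope ring_scope.

(* A point of βN_0 \ N_0 : a free (non-principal) ultrafilter on N_0. *)
Definition free_ultrafilter (eta : set_system nat) : Prop :=
  UltraFilter eta /\ forall n : nat, ~ eta [set n].

Section Defs.
Variable R : realType.
Notation mu := (@lebesgue_measure R).

(* The ultrafilter on R_+ associated with omega = (eta, t):
   generated by {A + t : A in eta}, i.e. the image of eta under n |-> n + t. *)
Definition omega_filter (eta : set_system nat) (t : R) : set_system R :=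
  (fun n : nat => n%:R + t) @ eta.

Definition exp_omega_filter (eta : set_system nat) (t : R) : set_system R :=
  expR @ omega_filter eta t.

(* f in L^infty(R_+^x) (represented by a function R -> R, only its values on
   [1,oo) matter): measurable on [1,oo) and essentially bounded there. *)
Definition Linf_mult (f : R -> R) : Prop :=
  measurable_fun (`[1%R, +oo[ : set R) f /\
  exists M : R, {ae mu, forall x : R, (`[1%R, +oo[%classic : set R) x -> `|f x| <= M}.

Definition W (f : R -> R) : R -> R := fun x => f (expR x).

Definition chi (eta : set_system nat) (t : R) (g : R -> R) : R :=
  lim ((fun x : R => expR (- x) * (\int[mu]_(s in `[0%R, x]) (g s * expR s)))
         @ omega_filter eta t).

Definition phi (eta : set_system nat) (t : R) (f : R -> R) : R :=
  lim ((fun x : R => x^-1 * (\int[mu]_(s in `[1%R, x]) f s))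
         @ exp_omega_filter eta t).
End Defs.

(* Main.v *)
Require Import Defs.
From HB Require Import structures.
From mathcomp Require Import all_boot all_order all_algebra.
From mathcomp Require Import all_classical all_reals all_analysis.
From mathcomp Require Import measurable_realfun.
Import Order.TTheory GRing.Theory Num.Theory.
Import numFieldNormedType.Exports.
Local Open Scope classical_set_scope.
Local Open Scope ring_scope.
Section S.
Context {R : realType}.
Local Notation mu := (@lebesgue_measure R).
Local Notation RL := (measurableTypeR R).

Lemma int_exp (c : R) : 0 <= c ->
  (\int[mu]_(s in `[0%R, c]) (expR s)%:E = (expR c - 1)%:E)%E.
Proof.
rewrite le_eqVlt => /predU1P[<-|c0].
  by rewrite set_itv1 integral_set1 expR0 subrr.
rewrite (@continuous_FTC2 _ expR expR)//.
- by rewrite expR0 EFinB.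
- by apply: continuous_subspaceT => y; exact: continuous_expR.
- split.
  + by move=> y _; exact: ex_derive.
  + by apply: cvg_at_right_filter; exact: continuous_expR.
  + by apply: cvg_at_left_filter; exact: continuous_expR.
- by move=> y _; rewrite derive1E; apply: derive_val.
Qed.
Variable x : R.
Hypothesis x0 : 0 <= x.

Definition dens : R -> \bar R := (fun s => (expR s)%:E) \_ `[0%R, x].
Definition nuE (A : set RL) : \bar R := (\int[mu]_(s in A) dens s)%E.

Lemma dens_ge0 s : (0 <= dens s)%E.
Proof. by rewrite /dens patchE; case: ifP => // _; rewrite lee_fin expR_ge0. Qed.

Lemma mdens : measurable_fun (setT : set RL) dens.
Proof.
apply/(measurable_restrictT _ _).1 => //.
apply/measurable_EFinP; apply: measurable_funTS; exact: measurable_expR.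
Qed.

Let nuE0 : nuE set0 = 0%E.
Proof. by rewrite /nuE integral_set0. Qed.

Let nuE_ge0 A : (0 <= nuE A)%E.
Proof. by apply: integral_ge0 => s _; exact: dens_ge0. Qed.

Let nuE_sigma : semi_sigma_additive nuE.
Proof.
exact: (@semi_sigma_additive_nng_induced _ _ _ mu dens mdens dens_ge0).
Qed.

HB.instance Definition _ := isMeasure.Build _ _ _ nuE nuE0 nuE_ge0 nuE_sigma.

Lemma nuEI A : measurable A -> nuE A = (\int[mu]_(s in A `&` `[0%R, x]) (expR s)%:E)%E.
Proof. by move=> mA; rewrite integral_mkcondr. Qed.

Let nuE_fin : fin_num_fun nuE.
Proof.
move=> U mU; rewrite ge0_fin_numE ?nuE_ge0//.
apply: (@le_lt_trans _ _ (nuE setT)).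
  apply: ge0_subset_integral => //; first exact: mdens.
  by move=> s _; exact: dens_ge0.
by rewrite nuEI // setTI int_exp // ltry.
Qed.

HB.instance Definition _ := @Measure_isFinite.Build _ _ _ nuE nuE_fin.

Lemma nuE_dom : nuE `<< mu.
Proof.
apply/null_content_dominatesP => A mA muA0.
rewrite /nuE; apply: null_set_integral => //.
exact: measurable_funTS mdens.
Qed.

Definition cdfE (E y : R) : R := if 1 <= y then Num.min y E - 1 else 0.

Lemma E1 : 1 <= expR x.
Proof. by rewrite -expR0 ler_expR. Qed.

Lemma L1 y : mu (`]-oo, y] `&` `[1%R, expR x]) = (cdfE (expR x) y)%:E.
Proof.
rewrite /cdfE; case: ifPn => y1.
  have -> : `]-oo, y] `&` `[1%R, expR x] = `[1%R, Num.min y (expR x)]%classic.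
    apply/seteqP; split => s /=; rewrite !in_itv/= ?le_min.
      by move=> [-> /andP[-> ->]].
    by move=> /andP[-> /andP[-> ->]].
  rewrite lebesgue_measure_itv/= lte_fin; case: ltP => [_|h]; first by rewrite EFinB.
  have m1 : 1 <= Num.min y (expR x) by rewrite le_min y1 E1.
  by rewrite (@le_anti _ _ (Num.min y (expR x)) 1 (introT andP (conj h m1))) subrr.
rewrite -[X in _ = X](measure0 mu); congr (mu _).
apply/seteqP; split => s //=; rewrite !in_itv/= => -[sy /andP[s1 _]].
by move: y1; rewrite (le_trans s1 sy).
Qed.

Lemma expR_min (a b : R) : expR (Num.min a b) = Num.min (expR a) (expR b).
Proof. by rewrite /Num.min ltr_expR; case: ifP. Qed.

Lemma L2 y : nuE (expR @^-1` `]-oo, y]) = (cdfE (expR x) y)%:E.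
Proof.
rewrite nuEI; last first.
  by rewrite -[X in measurable X]setTI; apply: measurable_expR => //.
rewrite /cdfE; case: ifPn => y1.
  have y0 : 0 < y by rewrite (lt_le_trans ltr01).
  have -> : expR @^-1` `]-oo, y] `&` `[0%R, x] = `[0%R, Num.min (ln y) x]%classic.
    apply/seteqP; split => s /=; rewrite !in_itv/= ?le_min.
      move=> [sy /andP[-> ->]]; rewrite andbT -ler_expR lnK //.
    move=> /andP[-> /andP[sl ->]]; split => //.
    by rewrite -[y]lnK // ler_expR.
  rewrite int_exp; last by rewrite le_min x0 ln_ge0.
  by rewrite expR_min lnK.
rewrite -[X in _ = X](integral_set0 mu (fun s => (expR s)%:E)); congr (integral _ _ _).
apply/seteqP; split => s //=; rewrite !in_itv/= => -[sy /andP[s0 _]].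
move: y1; rewrite (le_trans _ sy)// -expR0 ler_expR //.
Qed.
Lemma mpre (A : set RL) : measurable A -> measurable (expR @^-1` A : set RL).
Proof. by move=> mA; rewrite -[X in measurable X]setTI; exact: measurable_expR. Qed.

Definition pnu (A : set RL) : \bar R := nuE (expR @^-1` A).

Let pnu0 : pnu set0 = 0%E.
Proof. by rewrite /pnu preimage_set0 measure0. Qed.

Let pnu_ge0 A : (0 <= pnu A)%E.
Proof. exact: nuE_ge0. Qed.

Let pnu_sigma : semi_sigma_additive pnu.
Proof.
move=> F mF tF mUF; rewrite /pnu preimage_bigcup.
apply: (@measure_semi_sigma_additive _ _ _ nuE).
- by move=> n; exact: mpre.
- apply/trivIsetP => /= i j _ _ ij; rewrite -preimage_setI.
  by move/trivIsetP : tF => /(_ _ _ _ _ ij) ->//; rewrite preimage_set0.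
- by rewrite -preimage_bigcup; exact: mpre.
Qed.

HB.instance Definition _ := isMeasure.Build _ _ _ pnu pnu0 pnu_ge0 pnu_sigma.

Lemma itv_split (m : {measure set (measurableTypeR R) -> \bar R}) (a b : R) : a <= b ->
  (m `]-oo, b]%classic < +oo)%E -> m `]a, b]%classic = (m `]-oo, b]%classic - m `]-oo, a]%classic)%E.
Proof.
move=> ab mb.
have -> : `]a, b]%classic = `]-oo, b] `\` `]-oo, a].
  apply/seteqP; split => s /=; rewrite !in_itv/=.
    by move=> /andP[a_s sb]; split => //; apply/negP; rewrite -ltNge.
  by move=> [sb /negP]; rewrite -ltNge => a_s; rewrite a_s sb.
rewrite measureD //.
congr (_ - m _)%E; apply/seteqP; split => s /=; rewrite !in_itv/=.
  by move=> [].
by move=> sa; split => //; exact: le_trans sa ab.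
Qed.

Lemma mD1 : measurable (`[1%R, expR x] : set RL).
Proof. by []. Qed.

Lemma mD1c : measurable (~` `[1%R, expR x] : set RL).
Proof. exact: measurableC. Qed.

Lemma cdf_fin y : ((cdfE (expR x) y)%:E < +oo)%E.
Proof. exact: ltry. Qed.

Lemma push_eq (A : set RL) : measurable A -> A `<=` `[1%R, expR x] ->
  mu A = nuE (expR @^-1` A).
Proof.
move=> mA A1.
have -> : mu A = measure_add (mrestr mu mD1c) pnu A.
  apply: (lebesgue_measure_unique (mu := measure_add (mrestr mu mD1c) pnu)) => // X oX.
  transitivity (mrestr mu mD1c X + pnu X)%E; last exact/esym/measure_addE.
  move/ocitvP: oX => [->|[[a b]/= ab ->]].
    by rewrite /mrestr set0I !measure0 adde0.
  rewrite /mrestr.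
  rewrite (measureDI mu (measurable_itv `]a, b]) mD1) setDE; congr (_ + _)%E.
  have h1 : mu (`]a, b] `&` `[1%R, expR x]) =
      ((cdfE (expR x) b)%:E - (cdfE (expR x) a)%:E)%E.
    rewrite -!L1; apply: (@itv_split (mrestr mu mD1) a b (ltW ab)).
    by have := cdf_fin b; rewrite -L1.
  have h2 : pnu `]a, b] = ((cdfE (expR x) b)%:E - (cdfE (expR x) a)%:E)%E.
    rewrite -!L2; apply: (@itv_split pnu a b (ltW ab)).
    by have := cdf_fin b; rewrite -L2.
  by rewrite h2.
have hA : mrestr mu mD1c A = 0%E.
  rewrite /mrestr (_ : A `&` _ = set0) ?measure0 //.
  by apply/seteqP; split => s //= [/A1].
apply: (etrans (measure_addE _ _ _)); rewrite -[RHS]add0e; congr (_ + _)%E; exact: hA.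
Qed.

Lemma nuE_int (F : RL -> \bar R) (D : set RL) : measurable D ->
  nuE.-integrable D F ->
  (\int[nuE]_(s in D) F s = \int[mu]_(s in D) (F s * dens s))%E.
Proof.
move=> mD iF.
rewrite -(Radon_Nikodym_change_of_variables nuE_dom mD iF).
apply: ae_eq_integral => //.
- apply: emeasurable_funM; first exact: (measurable_int _ iF).
  apply: measurable_funTS.
  by apply: measurable_int; apply: Radon_Nikodym_integrable; exact: nuE_dom.
- apply: emeasurable_funM; first exact: (measurable_int _ iF).
  exact: measurable_funTS mdens.
- apply: ae_eqe_mul2l.
  apply: integral_ae_eq => //.
  + apply: (integrableS measurableT) => //.
    by apply: Radon_Nikodym_integrable; exact: nuE_dom.
  + exact: measurable_funTS mdens.
  + move=> A AD mA.
    by rewrite -Radon_Nikodym_integral //; exact: nuE_dom.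
Qed.

Lemma pre_exp : (expR @^-1` `[1%R, expR x] : set RL) = `[0%R, x]%classic.
Proof.
by apply/seteqP; split => s /=; rewrite !in_itv/= -expR0 !ler_expR.
Qed.

Lemma cov_exp (g : R -> R) : measurable_fun (`[1%R, expR x] : set RL) g ->
  mu.-integrable `[1%R, expR x] (EFin \o g) ->
  (\int[mu]_(u in `[1%R, expR x]) (g u)%:E =
   \int[mu]_(s in `[0%R, x]) (g (expR s) * expR s)%:E)%E.
Proof.
move=> mg ig.
pose D : set RL := `[1%R, expR x]%classic.
pose G := (EFin \o g) \_ D.
have mG : measurable_fun (setT : set RL) G.
  apply/(measurable_restrictT _ _).1; first exact: mD1.
  by apply/measurable_EFinP.
have mexp : measurable_fun (setT : set RL) (expR : RL -> RL) by exact: measurable_expR.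
have eqL : (\int[mu]_(u in D) (g u)%:E = \int[mu]_(u in D) G u)%E.
  by apply: eq_integral => u /[!inE] uD; rewrite /G patchE mem_set.
have intG : nuE.-integrable (expR @^-1` D) (G \o expR).
  apply/integrableP; split.
    by apply: measurable_funTS; exact: measurableT_comp mG mexp.
  have := @ge0_integral_pushforward _ _ RL RL R expR mexp nuE D (abse \o G) mD1.
  move=> <- //; last 2 first.
    by apply: measurableT_comp; [exact: abse_measurable | exact: measurable_funTS mG].
    by move=> y _ /=.
  rewrite -(@eq_measure_integral _ _ _ D _ mu); last by move=> A mA AD; exact: push_eq.
  move/integrableP: ig => [_]; apply: le_lt_trans.
  rewrite le_eqVlt; apply/orP; left; apply/eqP.
  by apply: eq_integral => u /[!inE] uD; rewrite /= /G patchE mem_set.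
rewrite eqL; transitivity (\int[nuE]_(s in expR @^-1` D) (G \o expR) s)%E.
  rewrite -(@integral_pushforward _ _ RL RL R expR mexp nuE D G mG intG mD1).
  by apply: eq_measure_integral => A mA AD; exact: push_eq.
rewrite pre_exp nuE_int //; last by rewrite -pre_exp.
apply: eq_integral => s /[!inE] sx.
have sD : D (expR s) by rewrite -pre_exp in sx.
by rewrite /G /dens /= !patchE mem_set // mem_set // EFinM.
Qed.
End S.
About cov_exp.
Section T.
Context {R : realType}.
Local Notation mu := (@lebesgue_measure R).
Lemma mf_sub (f : R -> R) (y : R) :
  measurable_fun (`[1%R, +oo[ : set R) f ->
  measurable_fun (`[1%R, expR y] : set (measurableTypeR R)) f.
Proof.
move=> mf; apply: measurable_funS mf => //.
by move=> u /=; rewrite !in_itv/= andbT => /andP[].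
Qed.

Lemma integ_ess (f : R -> R) (M : R) (y : R) :
  measurable_fun (`[1%R, +oo[ : set R) f ->
  {ae mu, forall x : R, (`[1%R, +oo[%classic : set R) x -> `|f x| <= M} ->
  mu.-integrable `[1%R, expR y] (EFin \o f).
Proof.
move=> mf hM.
have mD : measurable (`[1%R, expR y] : set (measurableTypeR R)) by [].
have mfD : measurable_fun (`[1%R, expR y] : set (measurableTypeR R)) f.
  apply: measurable_funS mf => //.
  by move=> u /=; rewrite !in_itv/= andbT => /andP[].
apply/integrableP; split; first exact/measurable_EFinP.
apply: (@le_lt_trans _ _ (\int[mu]_(u in `[1%R, expR y]) `|M|%:E)%E).
  apply: ae_ge0_le_integral => //.
  - apply: measurableT_comp => //; exact/measurable_EFinP.
  - case: hM => N [mN N0 sN]; exists N; split => // u /= hu; apply: sN => /= hP.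
    apply: hu => Du; rewrite lee_fin (le_trans (hP _)) ?ler_norm//.
    by move: Du; rewrite /= !in_itv/= andbT => /andP[].
have h : (mu `[1%R, expR y]%classic < +oo)%E.
  by rewrite lebesgue_measure_itv/=; case: ifP => _; rewrite -?EFinD ltry.
by rewrite integral_cst //; apply: lte_mul_pinfty.
Qed.
End T.

Theorem theorem4p1 (R : realType) (eta : set_system nat) (t : R) :
  free_ultrafilter eta -> 0 <= t <= 1 ->
  forall f : R -> R, Linf_mult f -> chi eta t (W f) = phi eta t f.
Proof.
move=> _ _ f [mf [M hM]].
have key : forall y : R,
    expR (- y) * (\int[lebesgue_measure]_(s in `[0%R, y]) (W f s * expR s)) =
    (expR y)^-1 * (\int[lebesgue_measure]_(s in `[1%R, expR y]) f s).
  move=> y; rewrite expRN; congr (_ * _).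
  have [y0|y0] := leP 0 y.
    rewrite /Rintegral (@cov_exp R y y0 f) //.
      exact: mf_sub.
    exact: (@integ_ess R f M y mf hM).
  rewrite !set_itv_ge ?Rintegral_set0 //.
    by rewrite bnd_simp -ltNge -expR0 ltr_expR.
  by rewrite bnd_simp -ltNge.
rewrite /chi /phi.
rewrite (funext key).
reflexivity.
Qed.
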